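(* Let $m\ge 2$ be an integer and let $n$ be a positive integer with $m^j\le n<m^{j+1}$ for some integer $j\ge 0$, with base $m$ representation $n=\alpha_j m^j+\cdots+\alpha_1 m+\alpha_0$ ($\alpha_j>0$, $0\le\alpha_i\le m-1$). For $i\ge 1$ let $\chi_i=0$ if $\alpha_{i-1}>0$ and $\chi_i=1$ if $\alpha_{i-1}=0$. Then the number $c_m(n)$ of $m$-ary partitions of $n$ without gaps satisfies \[ c_m(n)=1+\sum_{r=1}^{j}\ \sum_{k_r=\chi_r}^{\lfloor n/m^r\rfloor-1}\ \sum_{k_{r-1}=\chi_{r-1}}^{\alpha_{r-1}-1+mk_r}\cdots\sum_{k_1=\chi_1}^{\alpha_1-1+mk_2}1, \] that is, $c_m(n)=1+\sum_{r=1}^j N_r$, where $N_r$ is the number of integer tuples $(k_r,\ldots,k_1)$ with $\chi_r\le k_r\le \lfloor n/m^r\rfloor-1$ and $\chi_i\le k_i\le \alpha_i-1+mk_{i+1}$ for $1\le i\le r-1$.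
   Context: An $m$-ary partition of a positive integer $n$ is a partition of $n$ in which every part is a power of $m$. It is without gaps if, whenever $m^i$ is its largest part, every $m^k$ with $0\le k<i$ also appears as a part. $c_m(n)$ denotes the number of $m$-ary partitions of $n$ without gaps. $\lfloor a\rfloor$ is the floor of $a$. *)

(* Defs.v *)
From mathcomp Require Import all_boot.
Set Implicit Arguments. Unset Strict Implicit. Unset Printing Implicit Defensive.

(* An m-ary partition of n is represented by its multiplicity function:
   f i = number of parts equal to m^i.  Exponents i range over 0..n
   (m >= 2 forces m^i <= n => i <= n) and multiplicities over 0..n
   (each multiplicity is at most n), so no partition is lost. *)
Definition mary_partition_nogap (m n : nat) (f : {ffun 'I_n.+1 -> 'I_n.+1}) : bool :=
  (\sum_(i < n.+1) f i * m ^ i == n) &&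
  [forall i : 'I_n.+1,
     ((0 < f i) && [forall i' : 'I_n.+1, (0 < f i') ==> (i' <= i)]) ==>
     [forall k : 'I_n.+1, (k < i) ==> (0 < f k)]].

Definition c (m n : nat) : nat := #|[set f : {ffun 'I_n.+1 -> 'I_n.+1} | @mary_partition_nogap m n f]|.

Definition alpha (m n i : nat) : nat := (n %/ m ^ i) %% m.

Definition chi (m n i : nat) : nat := (alpha m n i.-1 == 0 : nat).

(* nested m n i b = sum_{k_i = chi_i}^{b-1} sum_{k_{i-1}=chi_{i-1}}^{alpha_{i-1}-1+m k_i}
   ... sum_{k_1=chi_1}^{alpha_1-1+m k_2} 1 ; upper bounds are written exclusively
   (b = upper+1) to avoid truncated subtraction. *)
Fixpoint nested (m n i b : nat) : nat :=
  match i with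
  | 0 => 1
  | i'.+1 => \sum_(chi m n i <= k < b) nested m n i' (alpha m n i' + m * k)
  end.

(* Main.v *)
Require Import Defs.
From mathcomp Require Import all_boot zify.
Set Implicit Arguments. Unset Strict Implicit.
Lemma modsplit n d m : 0 < d -> 0 < m -> n %% (d * m) = n %% d + d * ((n %/ d) %% m).
Proof.
move=> hd hm.
have e1 := divn_eq n d. have e2 := divn_eq (n %/ d) m.
set q := n %/ d in e1 e2 *. set r := n %% d in e1 *. set a := q %% m in e2 *.
have hr : r < d by rewrite ltn_mod.
have ha : a < m by rewrite ltn_mod.
have -> : n = q %/ m * (d * m) + (r + d * a).
  rewrite {1}e1 {1}e2. rewrite mulnDl. rewrite (mulnC d m) mulnA. lia.
rewrite modnMDl modn_small //.
have : d * a.+1 <= d * m by rewrite leq_mul2l ha orbT.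
rewrite mulnS.
lia.
Qed.

Definition supp n (p : nat) (f : {ffun 'I_n.+1 -> 'I_n.+1}) : bool :=
  [forall i : 'I_n.+1, (0 < f i) == (i < p)].
Definition wsum m n (f : {ffun 'I_n.+1 -> 'I_n.+1}) : nat := \sum_(i < n.+1) f i * m ^ i.
Definition E m n p N := \sum_(f : {ffun 'I_n.+1 -> 'I_n.+1}) nat_of_bool (supp p f && (wsum m f == N)).
Definition upd n (p x : 'I_n.+1) (f : {ffun 'I_n.+1 -> 'I_n.+1}) : {ffun 'I_n.+1 -> 'I_n.+1} :=
  [ffun i => if i == p then x else f i].

Lemma wsum_upd m n (p x : 'I_n.+1) (g : {ffun 'I_n.+1 -> 'I_n.+1}) : g p = 0 :> nat -> wsum m (upd p x g) = x * m ^ p + wsum m g.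
Proof.
move=> h; rewrite /wsum (bigD1 p) //= [in RHS](bigD1 p) //= ffunE eqxx h mul0n add0n.
congr (_ + _); apply: eq_bigr => i /negbTE hi; by rewrite ffunE hi.
Qed.

Lemma supp_upd n p (hp : p < n.+1) (x : 'I_n.+1) (g : {ffun 'I_n.+1 -> 'I_n.+1}) : g (Ordinal hp) = 0 :> nat ->
  supp p.+1 (upd (Ordinal hp) x g) = (0 < x) && supp p g.
Proof.
move=> h; rewrite /supp; apply/idP/idP.
- move/forallP=> H; apply/andP; split.
  + by have := H (Ordinal hp); rewrite ffunE eqxx ltnSn => /eqP ->.
  + apply/forallP => i; case: (eqVneq i (Ordinal hp)) => [->|hi].
      by rewrite h; apply/eqP; symmetry; apply/negbTE; rewrite -leqNgt; exact: leqnn.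
    have := H i; rewrite ffunE (negbTE hi) ltnS (leq_eqVlt (nat_of_ord i)).
    have -> : (nat_of_ord i == p) = false.
      by apply/negbTE; apply: contra hi => /eqP e; apply/eqP/val_inj.
    by [].
- case/andP=> hx /forallP H; apply/forallP => i; rewrite ffunE.
  case: (eqVneq i (Ordinal hp)) => [->|hi]; first by rewrite ltnSn hx.
  rewrite (eqP (H i)) ltnS (leq_eqVlt (nat_of_ord i)).
  have -> : (nat_of_ord i == p) = false.
    by apply/negbTE; apply: contra hi => /eqP e; apply/eqP/val_inj.
  by [].
Qed.

Lemma E_rec m n p (hp : p < n.+1) N :
  E m n p.+1 N = \sum_(x < n.+1) ((0 < x) && (x * m ^ p <= N)) * E m n p (N - x * m ^ p).
Proof.
set p0 := Ordinal hp.
rewrite /E (partition_big (fun f : {ffun 'I_n.+1 -> 'I_n.+1} => f p0) predT) //=.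
apply: eq_bigr => x _.
rewrite (reindex_onto (upd p0 x) (upd p0 ord0)); last first.
  move=> f /eqP hf; apply/ffunP => i; rewrite !ffunE; case: eqP => // ->; by rewrite hf.
rewrite big_distrr /= big_mkcond /=; apply: eq_bigr => g _.
rewrite ffunE eqxx /=.
case: (eqVneq (g p0 : nat) 0) => hg0.
- have -> : upd p0 ord0 (upd p0 x g) == g.
    apply/eqP/ffunP => i; rewrite !ffunE; case: eqP => // ->; by apply: val_inj; rewrite /= hg0.
  rewrite supp_upd // wsum_upd //.
  have -> : (x * m ^ p + wsum m g == N) = (x * m ^ p <= N) && (wsum m g == N - x * m ^ p).
    apply/eqP/andP => [<-|[h1 /eqP ->]]; last by rewrite subnKC.
    by rewrite leq_addr addKn.
  rewrite eqxx /=; by case: (0 < x); case: (supp p g); case: (x * m ^ p <= N); case: (wsum m g == _).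
- have -> : upd p0 ord0 (upd p0 x g) == g = false.
    apply/negbTE; apply/eqP => /ffunP /(_ p0); rewrite !ffunE eqxx => e.
    by move: hg0; rewrite -e.
  have -> : supp p g = false.
    apply/negbTE/negP => /forallP /(_ p0) /eqP; rewrite /= ltnn lt0n hg0 //.
  by rewrite andbF muln0.
Qed.

Lemma E0 m n N : E m n 0 N = (N == 0).
Proof.
pose f0 : {ffun 'I_n.+1 -> 'I_n.+1} := [ffun => ord0].
rewrite /E (bigD1 f0) //= big1 ?addn0.
- have -> : supp 0 f0 by apply/forallP => i; rewrite ffunE.
  have -> : wsum m f0 = 0 by rewrite /wsum big1 // => i _; rewrite ffunE.
  by rewrite eq_sym.
- move=> f hf; apply/eqP; rewrite eqb0; apply/negP => /andP[/forallP hs _].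
  move/eqP: hf; apply; apply/ffunP => i; rewrite ffunE; apply: val_inj => /=.
  by have := hs i; rewrite ltn0 => /eqP/negbT; rewrite lt0n => /negbNE/eqP.
Qed.

Lemma E_small m n p N : p < n.+1 -> N < m ^ p -> E m n p.+1 N = 0.
Proof.
move=> hp hN; rewrite (E_rec m hp) big1 // => x _.
case hx: (0 < x) => //=.
have h1 : m ^ p <= x * m ^ p by rewrite leq_pmull.
have -> : (x * m ^ p <= N) = false.
  by apply/negbTE; rewrite -ltnNge; exact: (leq_trans hN h1).
by [].
Qed.

Lemma claim m n : 1 < m -> forall i, i < n.+1 -> forall k, chi m n i.+1 <= k ->
  n %% m ^ i.+1 + m ^ i.+1 * k <= n ->
  E m n i.+1 (n %% m ^ i.+1 + m ^ i.+1 * k) = nested m n i (alpha m n i + m * k).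
Proof.
move=> hm; elim=> [|i IH] hi k hchi hN.
- rewrite /= expn1 in hN *.
  set N := n %% m + m * k in hN *.
  have hN1 : 0 < N.
    move: hchi; rewrite /chi /alpha /= expn0 divn1 /N.
    case: eqP => [-> /= hk|/eqP]; last by rewrite -lt0n => h _; apply: (leq_trans h); apply: leq_addr.
    rewrite add0n muln_gt0 hk andbT; lia.
  rewrite (E_rec m (ltn0Sn n)) expn0.
  have hNn : N < n.+1 by [].
  rewrite (bigD1 (Ordinal hNn)) //= big1 ?addn0.
  + by rewrite muln1 hN1 leqnn subnn E0.
  + move=> x hx; rewrite muln1 E0.
    have hxN : (nat_of_ord x != N).
      by apply: contra hx => /eqP e; apply/eqP/val_inj.
    case: (0 < x) => //=; case: leqP => //= h; rewrite subn_eq0.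
    by have -> : N <= x = false by lia.
- set d := m ^ i.+1.
  have hd : 0 < d by rewrite expn_gt0; lia.
  set R := n %% d.
  set B := alpha m n i.+1 + m * k.
  have eN : n %% m ^ i.+2 + m ^ i.+2 * k = R + d * B.
    rewrite (expnSr m i.+1) -/d modsplit //; last by lia.
    rewrite /B /alpha -/d -/R; lia.
  rewrite eN in hN *.
  rewrite (E_rec m hi) -/d.
  have hR : R < d by rewrite ltn_mod.
  have hB : B <= n.
    have : B <= d * B by rewrite mulnC leq_pmulr.
    lia.
  rewrite (eq_bigr (fun x : 'I_n.+1 => ((0 < x) && (x <= B)) * E m n i.+1 (R + d * (B - x)))); last first.
    move=> x _; have [hxB|hxB] := leqP x B.
    + have h1 : x * d <= d * B by rewrite [_ * d]mulnC leq_mul2l hxB orbT.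
      have -> : x * d <= R + d * B by lia.
      have -> : R + d * B - x * d = R + d * (B - x) by rewrite mulnBr; lia.
      by [].
    + have h1 : d * B.+1 <= x * d by rewrite [_ * d]mulnC leq_mul2l hxB orbT.
      have -> : x * d <= R + d * B = false by rewrite mulnS in h1; lia.
      by rewrite andbF.
  rewrite -(big_mkord xpredT (fun x => ((0 < x) && (x <= B)) * E m n i.+1 (R + d * (B - x)))).
  have hB1 : B.+1 <= n.+1 by [].
  rewrite (big_cat_nat (leq0n B.+1) hB1) /=.
  rewrite [X in _ + X]big_nat_cond [X in _ + X]big1 ?addn0; last first.
    move=> x /andP[/andP[h1 h2] _]; rewrite (leqNgt x B) h1 andbF //.
  rewrite big_nat_recl //= add0n big_nat_rev /= add0n.
  rewrite (eq_big_nat _ _ (F2 := fun x => E m n i.+1 (R + d * x))); last first.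
    move=> x /andP[_ hx].
    have -> : (B - x.+1 < B) = true by lia.
    have -> : B - (B - x.+1).+1 = x by lia.
    by rewrite mul1n.
  have key : forall x, chi m n i.+1 <= x < B -> E m n i.+1 (R + d * x) = nested m n i (alpha m n i + m * x).
    move=> x /andP[h1 h2]; rewrite /R /d; apply: IH => //; first by lia.
    have : d * x <= d * B by rewrite leq_mul2l (ltnW h2) orbT.
    rewrite -/d -/R; lia.
  case hc: (chi m n i.+1) key => [|c] key.
  + by apply: eq_big_nat => x hx; apply: key; rewrite hx.
  + have hc1 : chi m n i.+1 = 1 by rewrite hc; case: (c) hc => //= c' ; rewrite /chi; case: (_ == 0).
    rewrite -hc hc1.
    case: (posnP B) => [->|hB0]; first by rewrite !big_geq.
    rewrite big_ltn // muln0 addn0.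
    have -> : E m n i.+1 R = 0.
      apply: E_small; first by lia.
      have : alpha m n i == 0 by move: hc1; rewrite /chi /=; case: (_ == 0).
      rewrite /R /d (expnSr m i) modsplit ?expn_gt0; try lia.
      rewrite /alpha => /eqP ->; rewrite muln0 addn0 ltn_mod expn_gt0; lia.
    have c0 : c = 0 by move: hc; rewrite hc1 => -[].
    by subst c; rewrite add0n; apply: eq_big_nat => x hx; apply: key.
Qed.

Lemma top m n r : 1 < m -> r < n.+1 -> m ^ r <= n -> E m n r.+1 n = nested m n r (n %/ m ^ r).
Proof.
move=> hm hr hmr.
set k := n %/ m ^ r.+1.
have e : n %% m ^ r.+1 + m ^ r.+1 * k = n by rewrite /k addnC mulnC -divn_eq.
set q := n %/ m ^ r.
have hk : k = q %/ m by rewrite /k /q expnSr divnMA.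
have hchi : chi m n r.+1 <= k.
  case: (posnP k) => [k0|]; last by rewrite /chi; case: (_ == 0).
  rewrite /chi /= /alpha -/q k0.
  have hq : q < m by rewrite ltnNge -(@divn_gt0 m q) ?(ltnW hm) // -hk k0.
  have hq0 : 0 < q by rewrite divn_gt0 // expn_gt0; lia.
  by rewrite modn_small //; case: eqP => // q0; rewrite q0 in hq0.
have := claim hm hr hchi; rewrite e => /(_ (leqnn n)) ->.
congr nested; rewrite /alpha -/q hk.
by rewrite {3}(divn_eq q m) addnC mulnC.
Qed.

Lemma pointwise m n (f : {ffun 'I_n.+1 -> 'I_n.+1}) : 0 < n ->
  nat_of_bool (mary_partition_nogap m f) = \sum_(r < n.+1) nat_of_bool (supp r.+1 f && (wsum m f == n)).
Proof.
move=> hn.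
case: (boolP (mary_partition_nogap m f)) => hP.
- move: (hP) => /andP[hs /forallP hg].
  have [i0 hi0] : exists i0, 0 < f i0.
    case: (pickP (fun i => 0 < f i)) => [i0 hi0|h0]; first by exists i0; exact: hi0.
    exfalso; move: hs; rewrite big1 => [/eqP h0n|i _]; first by rewrite -h0n in hn.
    by have := h0 i; rewrite /= lt0n => /negbFE/eqP ->.
  case: (@arg_maxnP _ i0 (fun i => 0 < f i) (fun i : 'I_n.+1 => (i : nat)) hi0) => r hr hmax.
  have hlow : forall k : 'I_n.+1, k < r -> 0 < f k.
    have := hg r; rewrite hr /=.
    have -> : [forall i', (0 < f i') ==> (i' <= r)].
      by apply/forallP => i'; apply/implyP => h; exact: hmax.
    by move=> /= /forallP H k hk; have := H k; rewrite hk.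
  have hsupp : supp r.+1 f.
    apply/forallP => i; apply/eqP; apply/idP/idP => [h|]; first by rewrite ltnS; exact: hmax.
    rewrite ltnS leq_eqVlt => /orP[/eqP e|h]; last exact: hlow.
    by have -> : i = r by apply: val_inj.
  rewrite (bigD1 r) //= hsupp hs big1 // => j hj.
  apply/eqP; rewrite eqb0; apply/negP => /andP[/forallP hsj _].
  have fj : 0 < f j by have := hsj j; rewrite ltnSn => /eqP ->.
  have h1 := hmax j fj.
  have h2 : (r : nat) < j.+1 by have := hsj r; rewrite hr => /eqP <-.
  move/eqP: hj; apply; apply: val_inj => /=; lia.
- rewrite big1 // => r _; apply/eqP; rewrite eqb0; apply/negP => /andP[/forallP hs hw].
  move/negP: hP; apply; apply/andP; split; first exact: hw.
  apply/forallP => i; apply/implyP => /andP[hi /forallP hmx]; apply/forallP => k; apply/implyP => hk.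
  have hir : i < r.+1 by have := hs i; rewrite hi => /eqP <-.
  have hr0 : 0 < f r by have := hs r; rewrite ltnSn => /eqP ->.
  have := implyP (hmx r) hr0.
  move=> hri.
  have := hs k; rewrite (_ : k < r.+1 = true) ?(eqP) //; last by lia.
  by move=> /eqP ->.
Qed.

Unset Implicit Arguments.
Theorem theorem1p3 (m n j : nat) :
  2 <= m -> 0 < n -> m ^ j <= n < m ^ j.+1 ->
  c m n = 1 + \sum_(1 <= r < j.+1) nested m n r (n %/ m ^ r).
Proof.
move=> hm hn /andP[hj1 hj2].
have hjn : j < n.+1 by have := ltn_expl j hm; lia.
have -> : c m n = \sum_(r < n.+1) E m n r.+1 n.
  rewrite /c cardsE -sum1_card big_mkcond /=.
  rewrite (eq_bigr (fun f => \sum_(r < n.+1) nat_of_bool (supp r.+1 f && (wsum m f == n)))).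
    by rewrite exchange_big.
  move=> f _; rewrite -pointwise // unfold_in; by case: (mary_partition_nogap m f).
rewrite -(big_mkord xpredT (fun r => E m n r.+1 n)).
rewrite (big_cat_nat (leq0n j.+1) hjn) /=.
rewrite [X in _ + X]big_nat_cond [X in _ + X]big1 ?addn0; last first.
  move=> r /andP[/andP[h1 h2] _]; apply: E_small => //.
  apply: (leq_trans hj2); rewrite leq_pexp2l //; lia.
rewrite big_ltn // (top hm (ltn0Sn n)); last by rewrite expn0.
congr (_ + _); apply: eq_big_nat => r /andP[h1 h2]; apply: top => //; first by lia.
apply: leq_trans hj1; rewrite leq_pexp2l //; lia.
Qed.
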